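(* The system \[ \frac{dR}{dZ} = -\tan\theta+\frac{R}{2Z},\qquad \frac{d\theta}{dZ} = (n-1)\Bigl(\frac{1}{\cos\theta}-\frac{1}{R}\Bigr),\qquad Z>0,\ R>0,\ \theta\in\bigl(-\tfrac{\pi}{2},\tfrac{\pi}{2}\bigr), \] admits a unique formal solution of the form \[ R(Z)=\sum_{k\in\mathbb{N}}\frac{R_k}{Z^k},\qquad \theta(Z)=\sum_{k\in\mathbb{N}}\frac{\theta_k}{Z^k},\qquad (R_k,\theta_k)\in\mathbb{R}^2,\ R_0>0,\ -\tfrac{\pi}{2}<\theta_0<\tfrac{\pi}{2}. \] Moreover, the expansion $\sum_{k}R_k/Z^k$ is even in $Z$ (i.e. $R_k=0$ for $k$ odd) and the expansion $\sum_k\theta_k/Z^k$ is odd in $Z$ (i.e. $\theta_k=0$ for $k$ even).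
   Context: Let $n\ge 2$ be an integer. The axisymmetric capillary equation in $\mathbb{R}^{n+1}$, with the normalization $\kappa=n-1$, is the system $dr/dz=-\tan\theta$, $d\theta/dz=(n-1)\bigl(z/\cos\theta-1/r\bigr)$ with $r>0$, $\theta\in(-\pi/2,\pi/2)$. After the change of variables $(R,Z)=(zr,\,z^2/2)$ it becomes the system in $(R,\theta)$ as functions of $Z$ displayed in the claim. A formal solution means an expansion of the stated form which, when substituted into that system with $\tan\theta$ and $\cos\theta$ replaced by their power series in $\theta$, makes both equations hold at every order in $Z^{-1}$. *)

(* Defs.v *)
From Stdlib Require Import Reals Lra Arith.
From Coquelicot Require Import Coquelicot.
Open Scope R_scope.

(* A formal series  sum_k a_k / Z^k  is represented by its coefficient
   sequence  a : nat -> R  (coefficient of Z^{-k} is a k). *)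
Definition fseries := nat -> R.

Definition fmul (a b : fseries) : fseries :=
  fun k => sum_f_R0 (fun i => a i * b (k - i)%nat) k.

Definition fone : fseries := fun k => if Nat.eqb k 0 then 1 else 0.

Fixpoint fpow (a : fseries) (j : nat) : fseries :=
  match j with
  | O => fone
  | S j' => fmul a (fpow a j')
  end.

Definition fcenter (a : fseries) : fseries :=
  fun k => if Nat.eqb k 0 then 0 else a k.

(* Substitution of a formal series a (constant term a_0) into a function f,
   via the Taylor series of f at a_0:
     f(a) = sum_j f^(j)(a_0)/j! (a - a_0)^j.
   Since (a - a_0)^j only has terms of order >= j, the coefficient of Z^{-k}
   is a finite sum over j <= k. *)
Definition fcomp (f : R -> R) (a : fseries) : fseries :=
  fun k => sum_f_R0
    (fun j => Derive_n f j (a 0%nat) / INR (fact j) * fpow (fcenter a) j k) k.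

(* d/dZ of sum_k a_k Z^{-k} = sum_k (-k a_k) Z^{-k-1}:
   coefficient of Z^{-m} is -(m-1) a_{m-1} (and 0 for m = 0). *)
Definition fderivZ (a : fseries) : fseries :=
  fun m => match m with O => 0 | S j => - INR j * a j end.

(* multiplication by 1/Z *)
Definition fdivZ (a : fseries) : fseries :=
  fun m => match m with O => 0 | S j => a j end.

Definition formal_solution (n : nat) (Rs th : fseries) : Prop :=
  0 < Rs 0%nat /\ - (PI / 2) < th 0%nat < PI / 2 /\
  (forall m, fderivZ Rs m = - fcomp tan th m + fdivZ Rs m / 2) /\
  (forall m, fderivZ th m =
     (INR n - 1) * (fcomp (fun x => / cos x) th m - fcomp (fun x => / x) Rs m)).

(* Main.v *)
Require Import Defs.
From Stdlib Require Import Reals Arith Lra Lia FunctionalExtensionality.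
From Coquelicot Require Import Coquelicot.
Open Scope R_scope.

Inductive ex := ETan | ESec | EC (c : R) | EAdd (e1 e2 : ex) | EMul (e1 e2 : ex).
Fixpoint ev (e : ex) (x : R) : R := match e with
 | ETan => tan x | ESec => / cos x | EC c => c
 | EAdd a b => ev a x + ev b x | EMul a b => ev a x * ev b x end.
Fixpoint de (e : ex) : ex := match e with
 | ETan => EAdd (EC 1) (EMul ETan ETan) | ESec => EMul ESec ETan | EC _ => EC 0
 | EAdd a b => EAdd (de a) (de b) | EMul a b => EAdd (EMul (de a) b) (EMul a (de b)) end.
Fixpoint dk (k : nat) (e : ex) : ex := match k with O => e | S k => dk k (de e) end.

Lemma ev_derive e x : cos x <> 0 -> is_derive (ev e) x (ev (de e) x).
Proof.
  intro Hc. induction e; simpl.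
  - replace (1 + tan x * tan x) with (tan x ^ 2 + 1) by ring. apply is_derive_tan; auto.
  - change (is_derive (fun y => / cos y) x (/ cos x * tan x)). unfold tan.
    auto_derive. auto. field. auto.
  - exact (is_derive_const c x).
  - exact (is_derive_plus _ _ _ _ _ IHe1 IHe2).
  - exact (is_derive_mult _ _ _ _ _ IHe1 IHe2 Rmult_comm).
Qed.

Lemma Derive_n_S_in f k x : Derive_n f (S k) x = Derive_n (Derive f) k x.
Proof.
  revert x; induction k; intro x. reflexivity.
  change (Derive (Derive_n f (S k)) x = Derive (Derive_n (Derive f) k) x).
  apply Derive_ext. auto.
Qed.

Lemma Dn_ev : forall k e x, - (PI/2) < x < PI/2 -> Derive_n (ev e) k x = ev (dk k e) x.
Proof.
  induction k; intros e x Hx. reflexivity.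
  rewrite Derive_n_S_in. simpl dk. rewrite <- IHk by auto.
  apply Derive_n_ext_loc.
  assert (Hp : 0 < Rmin (x + PI/2) (PI/2 - x)) by (apply Rmin_pos; lra).
  exists (mkposreal _ Hp). intros t Ht. simpl in Ht.
  unfold ball in Ht; simpl in Ht; unfold AbsRing_ball, abs, minus, plus, opp in Ht; simpl in Ht.
  assert (Hm1 := Rmin_l (x + PI/2) (PI/2 - x)). assert (Hm2 := Rmin_r (x + PI/2) (PI/2 - x)).
  apply Rabs_def2 in Ht.
  apply is_derive_unique, ev_derive.
  apply Rgt_not_eq, cos_gt_0; lra.
Qed.

Inductive WP : ex -> bool -> Prop :=
 | WPtan : WP ETan true
 | WPsec : WP ESec false
 | WPc c : WP (EC c) false
 | WPz : WP (EC 0) true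
 | WPadd e1 e2 b : WP e1 b -> WP e2 b -> WP (EAdd e1 e2) b
 | WPmul e1 e2 b1 b2 : WP e1 b1 -> WP e2 b2 -> WP (EMul e1 e2) (xorb b1 b2).

Lemma WP_de e b : WP e b -> WP (de e) (negb b).
Proof.
  induction 1; simpl.
  - apply (WPadd _ _ false). constructor. apply (WPmul _ _ true true); constructor.
  - apply (WPmul _ _ false true); constructor.
  - constructor.
  - constructor.
  - constructor; auto.
  - replace (negb (xorb b1 b2)) with (xorb (negb b1) b2) by (destruct b1, b2; reflexivity).
    constructor. constructor; auto.
    replace (xorb (negb b1) b2) with (xorb b1 (negb b2)) by (destruct b1, b2; reflexivity).
    constructor; auto.
Qed.

Lemma WP_zero e b : WP e b -> b = true -> ev e 0 = 0.
Proof.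
  induction 1; simpl; intro Hb; try discriminate; auto.
  - apply tan_0.
  - rewrite IHWP1, IHWP2 by auto. ring.
  - destruct b1, b2; simpl in Hb; try discriminate.
    + rewrite IHWP1 by auto. ring.
    + rewrite IHWP2 by auto. ring.
Qed.

Lemma WP_dk k : forall e b, WP e b -> WP (dk k e) (if Nat.even k then b else negb b).
Proof.
  induction k; intros e b H; simpl dk. simpl; auto.
  apply WP_de in H. apply IHk in H. rewrite Nat.even_succ, <- Nat.negb_even.
  destruct (Nat.even k), b; exact H.
Qed.

Lemma pow_m1 j : (-1) ^ j = if Nat.even j then 1 else -1.
Proof.
  induction j. reflexivity. change ((-1)^(S j)) with (-1 * (-1)^j). rewrite IHj. rewrite Nat.even_succ, <- Nat.negb_even.
  destruct (Nat.even j); simpl; ring.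
Qed.

Lemma tan_par j : Derive_n tan j (- 0) * (-1) ^ j = -1 * Derive_n tan j 0.
Proof.
  rewrite Ropp_0. change (Derive_n (ev ETan) j 0 * (-1) ^ j = -1 * Derive_n (ev ETan) j 0).
  rewrite Dn_ev by (assert (PI > 0) by apply PI_RGT_0; lra).
  pose proof (WP_dk j _ _ WPtan) as H. rewrite pow_m1.
  destruct (Nat.even j).
  - rewrite (WP_zero _ _ H) by auto. ring.
  - ring.
Qed.

Lemma sec_par j : Derive_n (fun x => / cos x) j (- 0) * (-1) ^ j = 1 * Derive_n (fun x => / cos x) j 0.
Proof.
  rewrite Ropp_0. change (Derive_n (ev ESec) j 0 * (-1) ^ j = 1 * Derive_n (ev ESec) j 0).
  rewrite Dn_ev by (assert (PI > 0) by apply PI_RGT_0; lra).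
  pose proof (WP_dk j _ _ WPsec) as H. rewrite pow_m1.
  destruct (Nat.even j).
  - ring.
  - rewrite (WP_zero _ _ H) by auto. ring.
Qed.

Lemma sum_zero f N : (forall i, (i <= N)%nat -> f i = 0) -> sum_f_R0 f N = 0.
Proof.
  induction N; intro H; simpl. apply H; lia.
  rewrite IHN by (intros; apply H; lia). rewrite H by lia. ring.
Qed.

Lemma fmul_fone_r a k : fmul a fone k = a k.
Proof.
  unfold fmul. destruct k. simpl. unfold fone; simpl. ring.
  rewrite tech5. rewrite sum_zero. rewrite Nat.sub_diag. unfold fone; simpl. ring.
  intros i Hi. replace (S k - i)%nat with (S (k - i)) by lia. unfold fone; simpl. ring.
Qed.

Lemma fpow_0_at_0 c j : c 0%nat = 0 -> (1 <= j)%nat -> fpow c j 0%nat = 0.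
Proof.
  intros H Hj. destruct j. lia. simpl. unfold fmul. simpl. rewrite H. ring.
Qed.

Lemma fpow_local a b K : (forall k, (k < K)%nat -> a k = b k) ->
  forall j k, (k < K)%nat -> fpow a j k = fpow b j k.
Proof.
  intros H j. induction j; intros k Hk; simpl. reflexivity.
  unfold fmul. apply sum_eq. intros i Hi. rewrite H by lia. rewrite IHj by lia. reflexivity.
Qed.

Lemma fpow_top c d K j : c 0%nat = 0 -> d 0%nat = 0 -> (forall k, (k < K)%nat -> c k = d k) ->
  (1 <= K)%nat -> j <> 1%nat -> fpow c j K = fpow d j K.
Proof.
  intros Hc Hd H HK Hj. destruct j as [|j]. reflexivity.
  simpl. unfold fmul. apply sum_eq. intros i Hi.
  destruct (Nat.eq_dec i 0). subst. rewrite Hc, Hd. ring.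
  destruct (Nat.eq_dec i K). subst. rewrite Nat.sub_diag.
  rewrite !fpow_0_at_0 by (auto; lia). ring.
  rewrite H by lia. rewrite (fpow_local c d K H) by lia. reflexivity.
Qed.

Lemma sum_single g M : (1 <= M)%nat -> (forall j, j <> 1%nat -> g j = 0) -> sum_f_R0 g M = g 1%nat.
Proof.
  intros HM H. induction M. lia.
  destruct M. simpl. rewrite (H 0%nat) by lia. ring.
  simpl sum_f_R0 in *. rewrite IHM by lia. rewrite (H (S (S M))) by lia. ring.
Qed.

Lemma fcomp_diff f a b M : (1 <= M)%nat -> (forall k, (k < M)%nat -> a k = b k) ->
  fcomp f a M - fcomp f b M = Derive_n f 1 (a 0%nat) * (a M - b M).
Proof.
  intros HM H. unfold fcomp. rewrite <- minus_sum.
  assert (H0 : a 0%nat = b 0%nat) by (apply H; lia).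
  assert (Hcen : forall k, (k < M)%nat -> fcenter a k = fcenter b k)
    by (intros k Hk; unfold fcenter; destruct (Nat.eqb k 0); auto).
  rewrite sum_single by (auto; intros j Hj; rewrite H0;
     rewrite (fpow_top (fcenter a) (fcenter b) M j) by (auto; lia); ring).
  rewrite H0. simpl fpow. rewrite !fmul_fone_r. unfold fcenter.
  destruct M. lia. simpl. field.
Qed.

Lemma fpow_scale al be c j : forall k, fpow (fun i => be * al ^ i * c i) j k = be ^ j * al ^ k * fpow c j k.
Proof.
  induction j; intro k.
  - simpl. unfold fone. destruct k; simpl; ring.
  - simpl fpow. unfold fmul.
    transitivity (sum_f_R0 (fun i => c i * fpow c j (k - i)%nat * (be ^ S j * al ^ k)) k).
    + apply sum_eq. intros i Hi. rewrite IHj.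
      assert (Hp : al ^ i * al ^ (k - i)%nat = al ^ k) by (rewrite <- pow_add; f_equal; lia).
      rewrite <- Hp. simpl. ring.
    + rewrite <- scal_sum. ring.
Qed.

Definition flipR (a : fseries) : fseries := fun k => (-1) ^ k * a k.
Definition flipT (a : fseries) : fseries := fun k => -1 * (-1) ^ k * a k.

Lemma fcomp_flipR f a m : fcomp f (flipR a) m = (-1) ^ m * fcomp f a m.
Proof.
  unfold fcomp. assert (H0 : flipR a 0%nat = a 0%nat) by (unfold flipR; simpl; ring).
  assert (Hc : fcenter (flipR a) = fun i => 1 * (-1) ^ i * fcenter a i).
  { apply functional_extensionality. intro i. unfold fcenter, flipR. destruct i; simpl; ring. }
  rewrite H0, Hc. rewrite scal_sum. apply sum_eq. intros j _. rewrite fpow_scale, pow1. ring.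
Qed.

Lemma fcomp_flipT f a m s : (forall j, Derive_n f j (- a 0%nat) * (-1) ^ j = s * Derive_n f j (a 0%nat)) ->
  fcomp f (flipT a) m = s * (-1) ^ m * fcomp f a m.
Proof.
  intro Hs. unfold fcomp. assert (H0 : flipT a 0%nat = - a 0%nat) by (unfold flipT; simpl; ring).
  assert (Hc : fcenter (flipT a) = fun i => -1 * (-1) ^ i * fcenter a i).
  { apply functional_extensionality. intro i. unfold fcenter, flipT. destruct i; simpl; ring. }
  rewrite H0, Hc. rewrite scal_sum. apply sum_eq. intros j _. rewrite fpow_scale.
  unfold Rdiv. replace (Derive_n f j (- a 0%nat) * / INR (fact j) * ((-1) ^ j * (-1) ^ m * fpow (fcenter a) j m))
   with ((Derive_n f j (- a 0%nat) * (-1) ^ j) * / INR (fact j) * ((-1) ^ m * fpow (fcenter a) j m)) by ring.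
  rewrite Hs. ring.
Qed.

Definition sec := fun x : R => / cos x.
Definition inv := fun x : R => / x.

Lemma Dt : Derive_n tan 1 0 = 1.
Proof.
  change (Derive tan 0 = 1). apply is_derive_unique.
  replace 1 with (tan 0 ^ 2 + 1) by (rewrite tan_0; ring).
  apply is_derive_tan. rewrite cos_0. lra.
Qed.

Lemma Di : Derive_n inv 1 1 = -1.
Proof.
  change (Derive (fun x => / x) 1 = -1). apply is_derive_unique.
  auto_derive. lra. field.
Qed.

Definition upd (a : fseries) (M : nat) (v : R) : fseries := fun k => if Nat.eqb k M then v else a k.


Section Main.
Variable n : nat.

Definition tMf (m : nat) (p : fseries * fseries) : R :=
  - fcomp tan (snd p) (S m) + fst p m / 2 + INR m * fst p m.
Definition RMf (m : nat) (p : fseries * fseries) : R :=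
  - INR m * snd p m / (INR n - 1) - fcomp sec (snd p) (S m) - Derive_n sec 1 0 * tMf m p
  + fcomp inv (fst p) (S m).

Fixpoint stp (m : nat) : fseries * fseries := match m with
 | O => (fun k => if Nat.eqb k 0 then 1 else 0, fun _ => 0)
 | S m' => (upd (fst (stp m')) (S m') (RMf m' (stp m')), upd (snd (stp m')) (S m') (tMf m' (stp m')))
 end.

Definition Rs0 : fseries := fun k => fst (stp k) k.
Definition th0 : fseries := fun k => snd (stp k) k.

Lemma stp_agree : forall m k, fst (stp m) k = (if Nat.leb k m then Rs0 k else 0) /\
                           snd (stp m) k = (if Nat.leb k m then th0 k else 0).
Proof.
  unfold Rs0, th0. induction m; intro k.
  - destruct k; simpl; auto.
  - simpl stp. simpl fst. simpl snd. unfold upd.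
    destruct (Nat.eqb_spec k (S m)).
    + subst. rewrite Nat.leb_refl. simpl. unfold upd. rewrite ?Nat.eqb_refl. auto.
    + destruct (IHm k) as [H1 H2]. rewrite H1, H2.
      replace (Nat.leb k (S m)) with (Nat.leb k m). auto.
      destruct (Nat.leb_spec k m), (Nat.leb_spec k (S m)); auto; lia.
Qed.

Lemma stp_fst m k : (k <= m)%nat -> fst (stp m) k = Rs0 k.
Proof. intro H. destruct (stp_agree m k) as [H1 _]. rewrite H1. apply Nat.leb_le in H. rewrite H; auto. Qed.
Lemma stp_snd m k : (k <= m)%nat -> snd (stp m) k = th0 k.
Proof. intro H. destruct (stp_agree m k) as [_ H1]. rewrite H1. apply Nat.leb_le in H. rewrite H; auto. Qed.
Lemma stp_fst0 m k : (m < k)%nat -> fst (stp m) k = 0.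
Proof. intro H. destruct (stp_agree m k) as [H1 _]. rewrite H1. destruct (Nat.leb_spec k m); auto; lia. Qed.
Lemma stp_snd0 m k : (m < k)%nat -> snd (stp m) k = 0.
Proof. intro H. destruct (stp_agree m k) as [_ H1]. rewrite H1. destruct (Nat.leb_spec k m); auto; lia. Qed.

Lemma th0_S m : th0 (S m) = tMf m (stp m).
Proof. unfold th0. simpl stp. simpl snd. unfold upd. rewrite Nat.eqb_refl. reflexivity. Qed.
Lemma Rs0_S m : Rs0 (S m) = RMf m (stp m).
Proof. unfold Rs0. simpl stp. simpl fst. unfold upd. rewrite Nat.eqb_refl. reflexivity. Qed.
Lemma th0_0 : th0 0%nat = 0. Proof. reflexivity. Qed.
Lemma Rs0_0 : Rs0 0%nat = 1. Proof. reflexivity. Qed.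

Lemma fcomp0 f a : fcomp f a 0%nat = f (a 0%nat).
Proof. unfold fcomp. simpl. unfold fone. simpl. field. Qed.


Hypothesis hn : (2 <= n)%nat.

Lemma n1 : INR n - 1 <> 0.
Proof. apply le_INR in hn. simpl in hn. lra. Qed.

Lemma exist_sol : formal_solution n Rs0 th0.
Proof.
  assert (HPI := PI_RGT_0).
  split; [rewrite Rs0_0; lra|]. split; [rewrite th0_0; lra|]. split.
  - intro m. destruct m as [|m].
    + rewrite fcomp0, th0_0, tan_0. simpl. lra.
    + assert (Hd := fcomp_diff tan th0 (snd (stp m)) (S m)).
      rewrite stp_snd0 in Hd by lia. rewrite th0_0, Dt in Hd.
      specialize (Hd ltac:(lia) ltac:(intros; rewrite stp_snd by lia; auto)).
      simpl fderivZ. simpl fdivZ. rewrite th0_S in Hd. unfold tMf in Hd.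
      rewrite stp_fst in Hd by lia. lra.
  - intro m. destruct m as [|m].
    + rewrite !fcomp0, th0_0, Rs0_0, cos_0. simpl. field.
    + assert (Hd := fcomp_diff sec th0 (snd (stp m)) (S m)).
      rewrite stp_snd0 in Hd by lia. rewrite th0_0 in Hd.
      specialize (Hd ltac:(lia) ltac:(intros; rewrite stp_snd by lia; auto)).
      assert (He := fcomp_diff inv Rs0 (fst (stp m)) (S m)).
      rewrite stp_fst0 in He by lia. rewrite Rs0_0, Di in He.
      specialize (He ltac:(lia) ltac:(intros; rewrite stp_fst by lia; auto)).
      rewrite Rs0_S in He. rewrite th0_S in Hd. unfold RMf in He.
      rewrite stp_snd in He by lia.
      change (fcomp (fun x => / cos x)) with (fcomp sec).
      change (fcomp (fun x => / x)) with (fcomp inv).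
      simpl fderivZ.
      assert (Hn := n1).
      replace (fcomp sec th0 (S m)) with (fcomp sec (snd (stp m)) (S m) + Derive_n sec 1 0 * tMf m (stp m)) by lra.
      replace (fcomp inv Rs0 (S m)) with (fcomp inv (fst (stp m)) (S m) - (- INR m * th0 m / (INR n - 1) -
        fcomp sec (snd (stp m)) (S m) - Derive_n sec 1 0 * tMf m (stp m) + fcomp inv (fst (stp m)) (S m))) by lra.
      field. auto.
Qed.
End Main.

Lemma uniq_sol n (hn : (2 <= n)%nat) R' T' : formal_solution n R' T' -> R' = Rs0 n /\ T' = th0 n.
Proof.
  intros [HR0 [HT0 [E1 E2]]].
  destruct (exist_sol n hn) as [_ [_ [F1 F2]]].
  assert (Hn := n1 n hn).
  assert (HPI := PI_RGT_0).
  assert (T0 : T' 0%nat = 0).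
  { specialize (E1 0%nat). rewrite fcomp0 in E1. simpl in E1.
    apply tan_inj. lra. lra. rewrite tan_0. lra. }
  assert (R0 : R' 0%nat = 1).
  { specialize (E2 0%nat). rewrite !fcomp0, T0, cos_0 in E2. simpl in E2.
    assert (H : / R' 0%nat = 1).
    { symmetry in E2. apply Rmult_integral in E2. destruct E2 as [E|E]. contradiction.
      rewrite Rinv_1 in E. lra. }
    rewrite <- (Rinv_inv (R' 0%nat)), H. apply Rinv_1. }
  assert (Hall : forall M k, (k <= M)%nat -> R' k = Rs0 n k /\ T' k = th0 n k).
  { induction M; intros k Hk.
    - replace k with 0%nat by lia. rewrite R0, T0, Rs0_0, th0_0. auto.
    - destruct (Nat.eq_dec k (S M)); [|apply IHM; lia]. subst k.
      assert (Hag : forall k, (k < S M)%nat -> R' k = Rs0 n k) by (intros; apply IHM; lia).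
      assert (Tag : forall k, (k < S M)%nat -> T' k = th0 n k) by (intros; apply IHM; lia).
      assert (Hd := fcomp_diff tan T' (th0 n) (S M) ltac:(lia) Tag).
      rewrite T0, Dt in Hd.
      assert (e1 := E1 (S M)). assert (f1 := F1 (S M)).
      simpl fderivZ in e1, f1. simpl fdivZ in e1, f1.
      rewrite (Hag M) in e1 by lia.
      assert (HT : T' (S M) = th0 n (S M)) by lra.
      split; auto.
      assert (Hs := fcomp_diff (fun x => / cos x) T' (th0 n) (S M) ltac:(lia) Tag).
      rewrite HT in Hs. replace (th0 n (S M) - th0 n (S M)) with 0 in Hs by ring.
      assert (Hi := fcomp_diff inv R' (Rs0 n) (S M) ltac:(lia) Hag).
      rewrite R0, Di in Hi.
      assert (e2 := E2 (S M)). assert (f2 := F2 (S M)).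
      simpl fderivZ in e2, f2. rewrite (Tag M) in e2 by lia.
      rewrite e2 in f2. apply Rmult_eq_reg_l in f2; auto.
      change (fcomp (fun x => / x)) with (fcomp inv) in f2.
      lra. }
  split; apply functional_extensionality; intro k; apply (Hall k); lia.
Qed.

Lemma dZ_flipR a m : fderivZ (flipR a) m = - (-1) ^ m * fderivZ a m.
Proof. destruct m; unfold flipR; simpl; ring. Qed.
Lemma divZ_flipR a m : fdivZ (flipR a) m = - (-1) ^ m * fdivZ a m.
Proof. destruct m; unfold flipR; simpl; ring. Qed.
Lemma dZ_flipT a m : fderivZ (flipT a) m = (-1) ^ m * fderivZ a m.
Proof. destruct m; unfold flipT; simpl; ring. Qed.

Theorem proposition1 (n : nat) (hn : (2 <= n)%nat) :
  exists Rs th : fseries,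
    formal_solution n Rs th /\
    (forall Rs' th' : fseries, formal_solution n Rs' th' -> Rs' = Rs /\ th' = th) /\
    (forall k, Nat.Odd k -> Rs k = 0) /\
    (forall k, Nat.Even k -> th k = 0).
Proof.
  exists (Rs0 n), (th0 n).
  assert (Hsol := exist_sol n hn).
  assert (HPI := PI_RGT_0).
  assert (Hflip : formal_solution n (flipR (Rs0 n)) (flipT (th0 n))).
  { destruct Hsol as [_ [_ [F1 F2]]].
    split; [unfold flipR; simpl; rewrite Rs0_0; lra|].
    split; [unfold flipT; simpl; rewrite th0_0; lra|].
    split.
    - intro m. rewrite dZ_flipR, divZ_flipR, (fcomp_flipT tan (th0 n) m (-1)).
      rewrite F1. field.
      intro j. rewrite th0_0. apply tan_par.
    - intro m. rewrite dZ_flipT, (fcomp_flipT (fun x => / cos x) (th0 n) m 1), fcomp_flipR.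
      rewrite F2. ring.
      intro j. rewrite th0_0. apply sec_par. }
  destruct (uniq_sol n hn _ _ Hflip) as [HR HT].
  split; [exact Hsol|]. split; [apply uniq_sol; exact hn|]. split.
  - intros k Hk. assert (E := equal_f HR k). unfold flipR in E.
    rewrite pow_m1 in E. apply Nat.odd_spec in Hk. rewrite <- Nat.negb_odd, Hk in E.
    simpl in E. lra.
  - intros k Hk. assert (E := equal_f HT k). unfold flipT in E.
    rewrite pow_m1 in E. apply Nat.even_spec in Hk. rewrite Hk in E. lra.
Qed.
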